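(* Let $f(x)=\sum_{k=0}^{\infty}x^ka_k$, $a_k\in\mathbb{O}$, be a slice regular function on $\mathbb{B}$ such that $f(\mathbb{B})\subset\Pi:=\{x\in\mathbb{O}:\mathrm{Re}(x)\le1\}$, and assume $a_0=f(0)$ is real with $a_0\in[0,1)$. Then $$\mathcal{E}_f(x):=\sum_{k=0}^{\infty}|x^ka_k|+\left(\frac{1}{1+a_0}+\frac{|x|}{1-|x|}\right)\sum_{k=1}^{\infty}|x^ka_k|^2\le1$$ for all $x\in\mathbb{B}$ with $|x|\le R_*$, where $R_*\approx0.24683$ is the unique root in $(0,1)$ of $3r^3-5r^2-3r+1=0$. The constant $R_*$ cannot be improved: for every $r\in(R_*,1)$ there exist such an $f$ and $x$ with $|x|=r$ and $\mathcal{E}_f(x)>1$.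
   Context: $\mathbb{O}$ denotes the real algebra of octonions (the 8-dimensional non-commutative, non-associative but alternative normed division algebra over $\mathbb{R}$), with modulus $|x|=\sqrt{x\overline{x}}$ equal to the Euclidean norm on $\mathbb{R}^8$; the modulus is multiplicative, $|xy|=|x||y|$. For $x\in\mathbb{O}$, $\mathrm{Re}(x)=(x+\overline{x})/2$. $\mathbb{B}=\{x\in\mathbb{O}:|x|<1\}$ is the open unit ball. A slice regular function on $\mathbb{B}$ is (equivalently) a function of the form $f(x)=\sum_{k=0}^{\infty}x^ka_k$ with coefficients $a_k\in\mathbb{O}$ placed on the right, the series converging for every $x\in\mathbb{B}$ (the powers $x^k$ are unambiguous since $\mathbb{O}$ is alternative). *)

(* Defs.v *)
From Stdlib Require Import Reals Lra.
From Coquelicot Require Import Coquelicot.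
Open Scope R_scope.

Record quat := Quat { q0 : R; q1 : R; q2 : R; q3 : R }.

Definition qadd (a b : quat) : quat :=
  Quat (q0 a + q0 b) (q1 a + q1 b) (q2 a + q2 b) (q3 a + q3 b).
Definition qopp (a : quat) : quat := Quat (- q0 a) (- q1 a) (- q2 a) (- q3 a).
Definition qsub (a b : quat) : quat := qadd a (qopp b).
Definition qconj (a : quat) : quat := Quat (q0 a) (- q1 a) (- q2 a) (- q3 a).
Definition qmul (a b : quat) : quat :=
  Quat (q0 a * q0 b - q1 a * q1 b - q2 a * q2 b - q3 a * q3 b)
       (q0 a * q1 b + q1 a * q0 b + q2 a * q3 b - q3 a * q2 b)
       (q0 a * q2 b - q1 a * q3 b + q2 a * q0 b + q3 a * q1 b)
       (q0 a * q3 b + q1 a * q2 b - q2 a * q1 b + q3 a * q0 b).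
Definition qzero : quat := Quat 0 0 0 0.
Definition qreal (r : R) : quat := Quat r 0 0 0.

(** * Octonions, via the Cayley–Dickson construction on quaternions:
    (a,b)(c,d) = (a c - conj(d) b, d a + b conj(c)). *)
Record oct := Oct { olo : quat; ohi : quat }.

Definition omul (x y : oct) : oct :=
  Oct (qsub (qmul (olo x) (olo y)) (qmul (qconj (ohi y)) (ohi x)))
      (qadd (qmul (ohi y) (olo x)) (qmul (ohi x) (qconj (olo y)))).
Definition oadd (x y : oct) : oct := Oct (qadd (olo x) (olo y)) (qadd (ohi x) (ohi y)).
Definition oconj (x : oct) : oct := Oct (qconj (olo x)) (qopp (ohi x)).
Definition oreal (r : R) : oct := Oct (qreal r) qzero.
Definition oone : oct := oreal 1.

Definition ocoord (x : oct) (i : nat) : R :=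
  match i with
  | 0 => q0 (olo x) | 1 => q1 (olo x) | 2 => q2 (olo x) | 3 => q3 (olo x)
  | 4 => q0 (ohi x) | 5 => q1 (ohi x) | 6 => q2 (ohi x) | _ => q3 (ohi x)
  end.

Definition onorm (x : oct) : R :=
  sqrt (q0 (olo x)^2 + q1 (olo x)^2 + q2 (olo x)^2 + q3 (olo x)^2
      + q0 (ohi x)^2 + q1 (ohi x)^2 + q2 (ohi x)^2 + q3 (ohi x)^2).

Definition oRe (x : oct) : R := q0 (olo (oadd x (oconj x))) / 2.

(** Powers x^k (unambiguous by alternativity). *)
Fixpoint opow (x : oct) (k : nat) : oct :=
  match k with O => oone | S k' => omul x (opow x k') end.

Definition oseries_conv (u : nat -> oct) : Prop :=
  forall i : nat, (i < 8)%nat -> ex_series (fun k => ocoord (u k) i).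
Definition oSeries (u : nat -> oct) : oct :=
  Oct (Quat (Series (fun k => ocoord (u k) 0)) (Series (fun k => ocoord (u k) 1))
            (Series (fun k => ocoord (u k) 2)) (Series (fun k => ocoord (u k) 3)))
      (Quat (Series (fun k => ocoord (u k) 4)) (Series (fun k => ocoord (u k) 5))
            (Series (fun k => ocoord (u k) 6)) (Series (fun k => ocoord (u k) 7))).

Definition term (a : nat -> oct) (x : oct) (k : nat) : oct := omul (opow x k) (a k).

Definition slice_regular_ball (a : nat -> oct) : Prop :=
  forall x : oct, onorm x < 1 -> oseries_conv (term a x).

Definition sfun (a : nat -> oct) (x : oct) : oct := oSeries (term a x).

Definition maps_into_Pi (a : nat -> oct) : Prop :=
  forall x : oct, onorm x < 1 -> oRe (sfun a x) <= 1.

(** E_f(x), as an extended real: limit of the nondecreasing partial sums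
    (= +oo if one of the nonnegative series diverges). *)
Definition Ef (a : nat -> oct) (a0 : R) (x : oct) : Rbar :=
  Lim_seq (fun N =>
    sum_f_R0 (fun k => onorm (term a x k)) N
    + (1 / (1 + a0) + onorm x / (1 - onorm x))
      * sum_f_R0 (fun k => (onorm (term a x (S k)))^2) N).

(* Main.v *)
Require Import Defs.
From Stdlib Require Import Reals Lra Lia Psatz ZArith.
From Coquelicot Require Import Coquelicot.
Open Scope R_scope.

Definition osq (x : oct) : R :=
  q0 (olo x)^2 + q1 (olo x)^2 + q2 (olo x)^2 + q3 (olo x)^2
      + q0 (ohi x)^2 + q1 (ohi x)^2 + q2 (ohi x)^2 + q3 (ohi x)^2.

Lemma osq_ge0 x : 0 <= osq x.
Proof. unfold osq. nra. Qed.

Lemma onorm_osq x : onorm x = sqrt (osq x).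
Proof. reflexivity. Qed.

Lemma osq_mul x y : osq (omul x y) = osq x * osq y.
Proof.
  destruct x as [[a0 a1 a2 a3] [a4 a5 a6 a7]].
  destruct y as [[b0 b1 b2 b3] [b4 b5 b6 b7]].
  unfold osq, omul, qsub, qadd, qopp, qmul, qconj; simpl. ring.
Qed.

Ltac eq_with H k := match type of H with ?S = ?T =>
  apply Rminus_diag_uniq; transitivity (k * (S - T)); [ring | rewrite H; ring] end.

Definition oscal (s : R) (x : oct) : oct :=
  Oct (Quat (s * q0 (olo x)) (s * q1 (olo x)) (s * q2 (olo x)) (s * q3 (olo x)))
      (Quat (s * q0 (ohi x)) (s * q1 (ohi x)) (s * q2 (ohi x)) (s * q3 (ohi x))).
Definition sl (c s : R) (u : oct) : oct := oadd (oreal c) (oscal s u).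

Lemma sl_mul c s c' s' u : q0 (olo u) = 0 -> osq u = 1 ->
  omul (sl c s u) (sl c' s' u) = sl (c*c' - s*s') (c*s' + s*c') u.
Proof.
  destruct u as [[a0 a1 a2 a3] [a4 a5 a6 a7]]; simpl; intros H0 H1; subst a0.
  unfold osq in H1; simpl in H1.
  unfold sl, oscal, oadd, oreal, omul, qsub, qadd, qopp, qmul, qconj, qreal, qzero; simpl.
  f_equal; f_equal; try ring.
  eq_with H1 (-(s*s')).
Qed.

Ltac ounf := cbv beta iota delta [oone sl oscal oadd oreal omul oconj qsub qadd qopp qmul qconj qreal qzero olo ohi q0 q1 q2 q3 ocoord] in *.

Lemma onorm_mul x y : onorm (omul x y) = onorm x * onorm y.
Proof. rewrite !onorm_osq, osq_mul. apply sqrt_mult; apply osq_ge0. Qed.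

Lemma osq_oreal c : osq (oreal c) = c^2.
Proof. unfold osq; ounf; ring. Qed.

Lemma onorm_oreal c : onorm (oreal c) = Rabs c.
Proof. rewrite onorm_osq, osq_oreal, <- sqrt_Rsqr_abs. unfold Rsqr; f_equal; ring. Qed.

Lemma onorm_pow x k : onorm (opow x k) = onorm x ^ k.
Proof. induction k; simpl.
  - unfold oone. rewrite onorm_oreal. apply Rabs_R1.
  - rewrite onorm_mul, IHk. auto. Qed.

Lemma onorm_ge0 x : 0 <= onorm x.
Proof. apply sqrt_pos. Qed.

Lemma coord_le x i : Rabs (ocoord x i) <= onorm x.
Proof.
  rewrite onorm_osq. rewrite <- sqrt_Rsqr_abs. apply sqrt_le_1_alt.
  destruct x as [[a0 a1 a2 a3] [a4 a5 a6 a7]]; unfold osq, Rsqr; simpl.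
  destruct i as [|[|[|[|[|[|[|i]]]]]]]; simpl; nra.
Qed.

Lemma omul_oreal_l c y : omul (oreal c) y = oscal c y.
Proof. destruct y as [[a0 a1 a2 a3] [a4 a5 a6 a7]]. ounf. f_equal; f_equal; ring. Qed.

Lemma opow_oreal c k : opow (oreal c) k = oreal (c ^ k).
Proof. induction k; simpl; auto. rewrite IHk. ounf. f_equal; f_equal; ring. Qed.

Lemma ocoord_oscal c y i : ocoord (oscal c y) i = c * ocoord y i.
Proof. destruct i as [|[|[|[|[|[|[|i]]]]]]]; reflexivity. Qed.

Lemma term_real a rho m i : ocoord (term a (oreal rho) m) i = rho ^ m * ocoord (a m) i.
Proof. unfold term. rewrite opow_oreal, omul_oreal_l, ocoord_oscal. auto. Qed.

Lemma oRe_sfun a x : oRe (sfun a x) = Series (fun m => ocoord (term a x m) 0).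
Proof. unfold oRe, sfun, oSeries; simpl. field. Qed.

Lemma sl_pow r t u m : q0 (olo u) = 0 -> osq u = 1 ->
  opow (sl (r * cos t) (r * sin t) u) m = sl (r^m * cos (INR m * t)) (r^m * sin (INR m * t)) u.
Proof.
  intros H0 H1. induction m.
  - simpl. rewrite Rmult_0_l, cos_0, sin_0.
    destruct u as [[a0 a1 a2 a3] [a4 a5 a6 a7]]. ounf. f_equal; f_equal; ring.
  - simpl opow. rewrite IHm, sl_mul by auto. rewrite S_INR.
    rewrite Rmult_plus_distr_r, Rmult_1_l, cos_plus, sin_plus. f_equal; simpl; ring.
Qed.

Lemma Re_sl_mul c s u a : ocoord (omul (sl c s u) a) 0 = c * ocoord a 0 + s * ocoord (omul u a) 0.
Proof.
  destruct u as [[u0 u1 u2 u3] [u4 u5 u6 u7]]. destruct a as [[a0 a1 a2 a3] [a4 a5 a6 a7]].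
  ounf. ring.
Qed.

Lemma osq_sl c s u : q0 (olo u) = 0 -> osq u = 1 -> osq (sl c s u) = c^2 + s^2.
Proof.
  destruct u as [[u0 u1 u2 u3] [u4 u5 u6 u7]]; simpl; intros H0 H1; subst u0.
  unfold osq in *; ounf. eq_with H1 (s^2).
Qed.

Lemma choose_u a : exists u, q0 (olo u) = 0 /\ osq u = 1 /\
  (ocoord a 0)^2 + (ocoord (omul u a) 0)^2 = osq a.
Proof.
  destruct a as [[a0 a1 a2 a3] [a4 a5 a6 a7]].
  set (S2 := a1^2+a2^2+a3^2+a4^2+a5^2+a6^2+a7^2).
  assert (HS : 0 <= S2) by (unfold S2; nra).
  set (n := sqrt S2).
  assert (Hn : n * n = S2) by (apply sqrt_sqrt; auto).
  destruct (Req_dec n 0) as [Hz|Hz].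
  - assert (S2 = 0) by nra.
    assert (a1 = 0 /\ a2 = 0 /\ a3 = 0 /\ a4 = 0 /\ a5 = 0 /\ a6 = 0 /\ a7 = 0) as (?&?&?&?&?&?&?)
      by (unfold S2 in *; repeat split; nra).
    subst. exists (Oct (Quat 0 1 0 0) qzero). unfold osq. ounf. repeat split; ring.
  - assert (HS2 : S2 <> 0) by (rewrite <- Hn; apply Rmult_integral_contrapositive; auto).
    set (u := Oct (Quat 0 (-a1/n) (-a2/n) (-a3/n)) (Quat (-a4/n) (-a5/n) (-a6/n) (-a7/n))).
    exists u.
    assert (Hu : osq u = 1).
    { unfold u, osq; simpl. transitivity (S2/(n*n)); [unfold S2; field; auto|].
      rewrite Hn. field. auto. }
    assert (Hre : ocoord (omul u (Oct (Quat a0 a1 a2 a3) (Quat a4 a5 a6 a7))) 0 = S2 / n)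
      by (unfold u; ounf; unfold S2; field; auto).
    repeat split; auto. rewrite Hre.
    assert (E : (S2/n)^2 = S2).
    { replace ((S2/n)^2) with (S2*S2/(n*n)) by (field; auto). rewrite Hn. field. auto. }
    rewrite E. unfold osq, S2; simpl. ring.
Qed.

Lemma sin_periodZ x p : sin (x + 2 * IZR p * PI) = sin x.
Proof.
  apply Rminus_diag_uniq. rewrite form4.
  replace ((x + 2 * IZR p * PI - x) / 2) with (IZR p * PI) by field.
  rewrite sin_eq_0_1 by (exists p; reflexivity). ring.
Qed.

Lemma telescope (f : nat -> R) n :
  sum_f_R0 (fun j => f (S j) - f j) n = f (S n) - f O.
Proof. induction n; simpl; [ring | rewrite IHn; ring]. Qed.

Definition th (N j : nat) : R := 2 * PI * INR j / INR N.

Lemma trig_orth N p psi : (0 < N)%nat -> (forall z, p <> (z * Z.of_nat N)%Z) ->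
  sum_f_R0 (fun j => cos (IZR p * th N j + psi)) (pred N) = 0.
Proof.
  intros HN Hp.
  assert (HNr : INR N <> 0) by (apply not_0_INR; lia).
  set (al := 2 * PI * IZR p / INR N).
  assert (hs : sin (al / 2) <> 0).
  { intro H. apply sin_eq_0_0 in H. destruct H as [z Hz].
    apply (Hp z). apply eq_IZR. rewrite mult_IZR, <- INR_IZR_INZ.
    assert (PI <> 0) by (generalize PI_RGT_0; lra).
    replace (IZR p) with ((al/2) * INR N / PI) by (unfold al; field; split; auto).
    rewrite Hz. field. auto. }
  apply (Rmult_eq_reg_l (2 * sin (al / 2))); [| apply Rmult_integral_contrapositive; split; lra].
  rewrite Rmult_0_r, scal_sum.
  set (f := fun j : nat => sin (INR j * al + psi - al / 2)).
  transitivity (sum_f_R0 (fun j => f (S j) - f j) (pred N)).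
  - apply sum_eq. intros j _. unfold f. rewrite S_INR.
    replace (IZR p * th N j) with (INR j * al) by (unfold th, al; field; auto).
    replace ((INR j + 1) * al + psi - al / 2) with ((INR j * al + psi) + al / 2) by field.
    replace (INR j * al + psi - al / 2) with ((INR j * al + psi) - al / 2) by field.
    rewrite sin_plus, sin_minus. ring.
  - rewrite telescope. unfold f. replace (S (pred N)) with N by lia.
    replace (INR N * al + psi - al / 2) with ((0 * al + psi - al/2) + 2 * IZR p * PI)
      by (unfold al; field; auto).
    rewrite sin_periodZ. simpl. ring.
Qed.

Lemma is_series_lim (a : nat -> R) l : is_series a l -> is_lim_seq (fun n => sum_f_R0 a n) l.
Proof. intros H. apply (is_lim_seq_ext (sum_n a)). intros; apply sum_n_Reals. exact H. Qed.

Definition Cs (th : nat -> R) n (p : Z) := sum_f_R0 (fun j => cos (IZR p * th j)) n.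
Definition Ss (th : nat -> R) n (p : Z) := sum_f_R0 (fun j => sin (IZR p * th j)) n.

Lemma orth N p : (0 < N)%nat -> (forall z, p <> (z * Z.of_nat N)%Z) ->
  Cs (th N) (pred N) p = 0 /\ Ss (th N) (pred N) p = 0.
Proof.
  intros HN Hp. split.
  - unfold Cs. rewrite <- (trig_orth N p 0 HN Hp). apply sum_eq; intros; rewrite Rplus_0_r; auto.
  - unfold Ss. rewrite <- (trig_orth N p (- (PI/2)) HN Hp). apply sum_eq; intros.
    rewrite cos_plus, cos_neg, sin_neg, cos_PI2, sin_PI2. ring.
Qed.

Lemma Cs0 t n : Cs t n 0 = INR (S n).
Proof. unfold Cs. change (IZR 0) with 0. induction n; simpl sum_f_R0.
  - rewrite Rmult_0_l, cos_0; simpl; auto.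
  - rewrite IHn, Rmult_0_l, cos_0, (S_INR (S n)); auto. Qed.
Lemma Ss0 t n : Ss t n 0 = 0.
Proof. unfold Ss. change (IZR 0) with 0. induction n; simpl sum_f_R0.
  - rewrite Rmult_0_l, sin_0; auto.
  - rewrite IHn, Rmult_0_l, sin_0; ring. Qed.

Definition Tm (t : nat -> R) n (al be Am Bm : R) (m k : nat) :=
  sum_f_R0 (fun j => (Am * cos (INR m * t j) + Bm * sin (INR m * t j)) *
                     (1 + al * cos (INR k * t j) + be * sin (INR k * t j))) n.

Lemma Tform t n al be Am Bm m k :
  let zm := Z.of_nat m in let zk := Z.of_nat k in
  Tm t n al be Am Bm m k =
  Am * Cs t n zm + Bm * Ss t n zm
  + al * Am / 2 * (Cs t n (zm + zk) + Cs t n (zm - zk))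
  + be * Am / 2 * (Ss t n (zm + zk) - Ss t n (zm - zk))
  + al * Bm / 2 * (Ss t n (zm + zk) + Ss t n (zm - zk))
  + be * Bm / 2 * (Cs t n (zm - zk) - Cs t n (zm + zk)).
Proof.
  intros zm zk; subst zm zk. unfold Tm, Cs, Ss.
  induction n; simpl.
  - rewrite plus_IZR, minus_IZR, <- !INR_IZR_INZ.
    rewrite !Rmult_plus_distr_r, !Rmult_minus_distr_r, cos_plus, cos_minus, sin_plus, sin_minus.
    field.
  - rewrite IHn. rewrite plus_IZR, minus_IZR, <- !INR_IZR_INZ.
    rewrite !Rmult_plus_distr_r, !Rmult_minus_distr_r, !cos_plus, !cos_minus, !sin_plus, !sin_minus.
    field.
Qed.

Lemma ex_series_Rplus a b : ex_series a -> ex_series b -> ex_series (fun n => a n + b n).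
Proof. intros; apply (ex_series_plus a b); auto. Qed.

Lemma ex_series_Rext (a b : nat -> R) : (forall n, a n = b n) -> ex_series a -> ex_series b.
Proof. intros H. apply ex_series_ext. exact H. Qed.

Lemma ex_series_Rscal_l c (a : nat -> R) : ex_series a -> ex_series (fun n => c * a n).
Proof. intros H. apply (ex_series_ext (fun n => a n * c)); [intros; apply Rmult_comm|]. apply ex_series_scal_r; auto. Qed.

Lemma ex_series_cmp (a b : nat -> R) : (forall n, Rabs (a n) <= b n) -> ex_series b -> ex_series a.
Proof. intros H Hb. apply (ex_series_le a b); auto. Qed.

Lemma sum_one (g : nat -> R) n : (forall m, (0 < m <= n)%nat -> g m = 0) -> sum_f_R0 g n = g O.
Proof. induction n; intros H; simpl; auto. rewrite IHn.
  - rewrite (H (S n)) by lia. ring.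
  - intros; apply H; lia. Qed.

Lemma sum_two (g : nat -> R) n k : (0 < k)%nat -> (k <= n)%nat ->
  (forall m, (0 < m)%nat -> m <> k -> (m <= n)%nat -> g m = 0) -> sum_f_R0 g n = g O + g k.
Proof.
  induction n; intros Hk Hkn H; [lia|]. simpl.
  destruct (Nat.eq_dec k (S n)) as [->|Hne].
  - rewrite sum_one; auto. intros m Hm; apply H; lia.
  - rewrite IHn; [| lia | lia | intros; apply H; lia].
    rewrite (H (S n)) by lia. ring.
Qed.

Lemma sum_scal_l (f : nat -> R) c n : sum_f_R0 (fun j => c * f j) n = c * sum_f_R0 f n.
Proof. induction n; simpl; [ring| rewrite IHn; ring]. Qed.

Lemma sum_Series (g : nat -> nat -> R) n : (forall j, ex_series (g j)) ->
  ex_series (fun m => sum_f_R0 (fun j => g j m) n) /\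
  sum_f_R0 (fun j => Series (g j)) n = Series (fun m => sum_f_R0 (fun j => g j m) n).
Proof.
  intros H. induction n; simpl.
  - split; auto.
  - destruct IHn as [He Heq]. split.
    + apply ex_series_Rplus; auto.
    + rewrite Heq, Series_plus; auto.
Qed.

Lemma w_bound al be c s : al^2 + be^2 <= 1 -> c^2 + s^2 = 1 ->
  0 <= 1 + (al * c + be * s) <= 2.
Proof. intros H1 H2.
  assert (E: (al*c+be*s)^2 + (al*s-be*c)^2 = (al^2+be^2)*(c^2+s^2)) by ring.
  rewrite H2, Rmult_1_r in E.
  generalize (pow2_ge_0 (al*s-be*c)); intro.
  assert (HX: (al*c+be*s)^2 <= 1) by lra.
  revert HX. generalize (al*c+be*s). intros X HX. split; nra. Qed.

Lemma Tbound t n al be Am Bm m k : al^2 + be^2 <= 1 ->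
  Rabs (Tm t n al be Am Bm m k) <= 2 * INR (S n) * (Rabs Am + Rabs Bm).
Proof.
  intros Hab. unfold Tm. eapply Rle_trans; [apply sum_f_R0_triangle|].
  replace (2 * INR (S n) * (Rabs Am + Rabs Bm)) with (sum_f_R0 (fun _ => 2 * (Rabs Am + Rabs Bm)) n)
    by (rewrite sum_cte; ring). apply sum_Rle. intros j _.
  rewrite Rabs_mult.
  destruct (w_bound al be (cos (INR k * t j)) (sin (INR k * t j)) Hab) as [w0 w2].
  { rewrite <- (sin2_cos2 (INR k * t j)). unfold Rsqr. ring. }
  rewrite (Rabs_right (1 + _ + _)) by lra.
  change (1 + al * cos (INR k * t j) + be * sin (INR k * t j)) with (1 + al * cos (INR k * t j) + be * sin (INR k * t j)) in *.
  assert (Rabs (Am * cos (INR m * t j) + Bm * sin (INR m * t j)) <= Rabs Am + Rabs Bm).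
  { eapply Rle_trans; [apply Rabs_triang|]. rewrite !Rabs_mult.
    generalize (COS_bound (INR m * t j)) (SIN_bound (INR m * t j)); intros Hc Hs.
    assert (Rabs (cos (INR m * t j)) <= 1) by (apply Rabs_le; lra).
    assert (Rabs (sin (INR m * t j)) <= 1) by (apply Rabs_le; lra).
    generalize (Rabs_pos Am) (Rabs_pos Bm) (Rabs_pos (cos (INR m * t j))) (Rabs_pos (sin (INR m * t j))).
    nra. }
  generalize (Rabs_pos (Am * cos (INR m * t j) + Bm * sin (INR m * t j))). nra.
Qed.

Lemma nodiv_lt (p : Z) N : (0 < p < Z.of_nat N)%Z \/ (- Z.of_nat N < p < 0)%Z ->
  forall z, p <> (z * Z.of_nat N)%Z.
Proof. intros H z Hz. subst p.
  assert (z <= -1 \/ z = 0 \/ 1 <= z)%Z as [Hz|[Hz|Hz]] by lia.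
  - assert (z * Z.of_nat N <= - Z.of_nat N)%Z by nia. lia.
  - subst; lia.
  - assert (Z.of_nat N <= z * Z.of_nat N)%Z by nia. lia. Qed.

Section Carath.
Variables (A B : nat -> R) (r a0 : R) (k : nat).
Hypothesis Hr : 0 <= r < 1.
Hypothesis Hk : (0 < k)%nat.
Hypothesis HA0 : A 0%nat = a0.
Let D m := r^m * (Rabs (A m) + Rabs (B m)).
Hypothesis HD : ex_series D.
Let U t m := r^m * (A m * cos (INR m * t) + B m * sin (INR m * t)).
Hypothesis Hle : forall t, Series (U t) <= 1.

Lemma U_ex t : ex_series (U t).
Proof.
  apply (ex_series_cmp _ D); auto. intros m. unfold U, D.
  rewrite Rabs_mult, Rabs_right by (apply Rle_ge, pow_le; lra).
  apply Rmult_le_compat_l; [apply pow_le; lra|].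
  eapply Rle_trans; [apply Rabs_triang|]. rewrite !Rabs_mult.
  generalize (COS_bound (INR m * t)) (SIN_bound (INR m * t)); intros Hc Hs.
  assert (Rabs (cos (INR m * t)) <= 1) by (apply Rabs_le; lra).
  assert (Rabs (sin (INR m * t)) <= 1) by (apply Rabs_le; lra).
  generalize (Rabs_pos (A m)) (Rabs_pos (B m)) (Rabs_pos (cos (INR m * t))) (Rabs_pos (sin (INR m * t))).
  nra.
Qed.

Lemma carath_N al be n :
  al^2 + be^2 <= 1 ->
  a0 + r^k * (al * A k + be * B k) / 2 <= 1 + 2 * Series (fun m => D (n + k + 1 + m)).
Proof.
  intros Hab.
  set (N := (n + 2 * k + 1)%nat). set (M := (n + k + 1)%nat).
  assert (HN : (0 < N)%nat) by lia.
  assert (HNr : 0 < INR N) by (apply lt_0_INR; lia).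
  set (t := th N). set (n' := pred N).
  set (w := fun j => 1 + al * cos (INR k * t j) + be * sin (INR k * t j)).
  set (T := fun m => Tm t n' al be (A m) (B m) m k).
  assert (Hw : forall j, 0 <= w j).
  { intro j. unfold w. destruct (w_bound al be (cos (INR k * t j)) (sin (INR k * t j)) Hab); [|lra].
    rewrite <- (sin2_cos2 (INR k * t j)). unfold Rsqr. ring. }
  assert (Ok : Cs t n' (Z.of_nat k) = 0 /\ Ss t n' (Z.of_nat k) = 0).
  { apply orth; auto. apply nodiv_lt. unfold N; lia. }
  assert (Omk : Cs t n' (0 - Z.of_nat k) = 0 /\ Ss t n' (0 - Z.of_nat k) = 0).
  { apply orth; auto. apply nodiv_lt. unfold N; lia. }
  assert (Opk : Cs t n' (0 + Z.of_nat k) = 0 /\ Ss t n' (0 + Z.of_nat k) = 0).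
  { apply orth; auto. apply nodiv_lt. unfold N; lia. }
  assert (O2k : Cs t n' (Z.of_nat k + Z.of_nat k) = 0 /\ Ss t n' (Z.of_nat k + Z.of_nat k) = 0).
  { apply orth; auto. apply nodiv_lt. unfold N; lia. }
  assert (HSN : INR (S n') = INR N) by (f_equal; unfold n'; lia).
  assert (Hsw : sum_f_R0 w n' = INR N).
  { transitivity (Tm t n' al be 1 0 0 k).
    - unfold Tm. apply sum_eq; intros j _. unfold w. simpl INR. rewrite Rmult_0_l, cos_0, sin_0. ring.
    - rewrite Tform. simpl Z.of_nat. rewrite Cs0, Ss0, (proj1 Opk), (proj2 Opk), (proj1 Omk), (proj2 Omk).
      rewrite HSN. ring. }
  assert (Hex : sum_f_R0 (fun j => Series (U (t j)) * w j) n' = Series (fun m => r^m * T m)).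
  { transitivity (sum_f_R0 (fun j => Series (fun m => U (t j) m * w j)) n').
    - apply sum_eq; intros j _. rewrite Series_scal_r. auto.
    - assert (Hj : forall j, ex_series (fun m => U (t j) m * w j)).
      { intros j. apply ex_series_scal_r, U_ex. }
      rewrite (proj2 (sum_Series (fun j m => U (t j) m * w j) n' Hj)).
      apply Series_ext; intros m. unfold T, Tm, U, w. rewrite <- sum_scal_l.
      apply sum_eq; intros; ring. }
  assert (Hpos : 0 <= sum_f_R0 (fun j => (1 - Series (U (t j))) * w j) n').
  { apply cond_pos_sum. intros j. apply Rmult_le_pos; auto. generalize (Hle (t j)); lra. }
  assert (Hsplit : sum_f_R0 (fun j => (1 - Series (U (t j))) * w j) n' =
                   sum_f_R0 w n' - sum_f_R0 (fun j => Series (U (t j)) * w j) n').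
  { rewrite <- minus_sum. apply sum_eq; intros; ring. }
  rewrite Hsplit, Hsw, Hex in Hpos.
  assert (HTb : forall m, Rabs (r^m * T m) <= 2 * INR N * D m).
  { intros m. unfold D, T. rewrite Rabs_mult, Rabs_right by (apply Rle_ge, pow_le; lra).
    rewrite <- HSN. generalize (Tbound t n' al be (A m) (B m) m k Hab). intro.
    generalize (pow_le r m (proj1 Hr)). nra. }
  assert (HexT : ex_series (fun m => r^m * T m)).
  { apply (ex_series_cmp _ (fun m => 2 * INR N * D m)); auto.
    apply ex_series_Rscal_l; auto. }
  rewrite (Series_incr_n _ M) in Hpos by (unfold M; lia) || auto.
  assert (Hfin : sum_f_R0 (fun m => r^m * T m) (pred M) = INR N * a0 + r^k * (INR N / 2 * (al * A k + be * B k))).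
  { rewrite (sum_two _ _ k); [| auto | unfold M; lia |].
    - f_equal.
      + unfold T. rewrite Tform. simpl Z.of_nat. rewrite Cs0, Ss0, (proj1 Opk), (proj2 Opk), (proj1 Omk), (proj2 Omk).
        rewrite HSN, HA0. simpl. ring.
      + unfold T. rewrite Tform. rewrite Z.sub_diag, Cs0, Ss0, (proj1 Ok), (proj2 Ok), (proj1 O2k), (proj2 O2k).
        rewrite HSN. field.
    - intros m Hm0 Hmk HmM. unfold T. rewrite Tform.
      assert (HM : (m < M)%nat) by (unfold M in *; lia).
      assert (Ot : forall p, (forall z, p <> (z * Z.of_nat N)%Z) -> Cs t n' p = 0 /\ Ss t n' p = 0)
        by (intros; apply orth; auto).
      destruct (Ot (Z.of_nat m)) as [-> ->]. { apply nodiv_lt. unfold N, M in *; lia. }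
      destruct (Ot (Z.of_nat m + Z.of_nat k)%Z) as [-> ->]. { apply nodiv_lt. unfold N, M in *; lia. }
      destruct (Ot (Z.of_nat m - Z.of_nat k)%Z) as [-> ->]. { apply nodiv_lt. unfold N, M in *; lia. }
      ring. }
  rewrite Hfin in Hpos.
  assert (Htail : - (2 * INR N * Series (fun m => D (M + m)%nat)) <= Series (fun m => r^(M + m) * T (M + m)%nat)).
  { assert (HexD : ex_series (fun m => D (M + m)%nat)) by (apply ex_series_incr_n; auto).
    assert (Rabs (Series (fun m => r^(M + m) * T (M + m)%nat)) <= 2 * INR N * Series (fun m => D (M + m)%nat)).
    { eapply Rle_trans; [apply Series_Rabs|].
      - apply (ex_series_cmp _ (fun m => 2 * INR N * D (M + m)%nat)).
        + intros; rewrite Rabs_Rabsolu; auto.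
        + apply ex_series_Rscal_l; auto.
      - rewrite <- Series_scal_l. apply Series_le.
        + intros m; split; [apply Rabs_pos| auto].
        + apply ex_series_Rscal_l; auto. }
    apply Rabs_le_between in H || (generalize (Rabs_le_between _ _ H)); lra. }
  assert (E : INR N * (a0 + r^k * (al * A k + be * B k) / 2) <= INR N * (1 + 2 * Series (fun m => D (n + k + 1 + m)))).
  { replace (n + k + 1)%nat with M by reflexivity. nra. }
  apply Rmult_le_reg_l in E; auto.
Qed.

Lemma carath : r^k * sqrt (A k ^2 + B k ^2) <= 2 * (1 - a0).
Proof.
  set (rho := sqrt (A k ^2 + B k ^2)).
  assert (Hrho : 0 <= rho) by apply sqrt_pos.
  assert (Hrr : rho * rho = A k ^ 2 + B k ^ 2) by (apply sqrt_sqrt; nra).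
  assert (Hab : exists al be, al^2 + be^2 <= 1 /\ al * A k + be * B k = rho).
  { destruct (Req_dec rho 0) as [H0|H0].
    - exists 0, 0. split; [nra|]. rewrite H0; ring.
    - exists (A k / rho), (B k / rho). split.
      + apply Req_le. field_simplify; auto. rewrite <- Hrr. field; auto.
      + field_simplify; auto. rewrite <- Hrr. field; auto. }
  destruct Hab as [al [be [Hab Hm]]].
  assert (Hc : forall n, a0 + r^k * rho / 2 <= 1 + 2 * (Series D - sum_f_R0 D (n + k))).
  { intros n. rewrite <- Hm. eapply Rle_trans; [apply (carath_N al be n Hab)|].
    rewrite (Series_incr_n D (n + k + 1)) by (lia || auto).
    replace (pred (n + k + 1)) with (n + k)%nat by lia. apply Req_le. ring. }
  assert (Hl : is_lim_seq (fun n => 1 + 2 * (Series D - sum_f_R0 D (n + k))) (1 + 2 * (Series D - Series D))).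
  { apply is_lim_seq_plus'; [apply is_lim_seq_const|].
    apply (is_lim_seq_ext (fun n => 2 * (Series D - sum_f_R0 D (n + k)))); [intros; reflexivity|].
    change (Finite (2 * (Series D - Series D))) with (Rbar_mult 2 (Series D - Series D)).
    apply is_lim_seq_scal_l. apply is_lim_seq_minus'; [apply is_lim_seq_const|].
    apply (is_lim_seq_incr_n (fun n => sum_f_R0 D n) k). apply is_series_lim, Series_correct; auto. }
  generalize (is_lim_seq_le _ _ _ _ Hc (is_lim_seq_const _) Hl). simpl. intros H.
  assert (0 <= r^k) by (apply pow_le; lra). lra.
Qed.

End Carath.

Lemma abs_conv (c : nat -> R) rho r : 0 <= r < rho ->
  ex_series (fun m => rho^m * c m) -> ex_series (fun m => r^m * Rabs (c m)).
Proof.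
  intros Hr Hs.
  assert (Hl : is_lim_seq (fun m => c m * rho ^ m) 0).
  { generalize (ex_series_lim_0 _ Hs). apply is_lim_seq_ext. intros; ring. }
  assert (HR : Rbar_le (Rabs rho) (CV_radius c)).
  { apply Rbar_not_lt_le. intro H. apply (CV_disk_outside c rho H). exact Hl. }
  assert (HR2 : Rbar_lt (Rabs r) (CV_radius c)).
  { eapply Rbar_lt_le_trans; [|exact HR]. simpl. rewrite !Rabs_right by lra. lra. }
  apply (ex_series_Rext (fun m => Rabs (c m * r^m))).
  - intros m. rewrite Rabs_mult, (Rabs_right (r^m)) by (apply Rle_ge, pow_le; lra). ring.
  - apply CV_disk_inside; auto.
Qed.

Definition csum (y : oct) : R :=
  Rabs (ocoord y 0) + Rabs (ocoord y 1) + Rabs (ocoord y 2) + Rabs (ocoord y 3)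
  + Rabs (ocoord y 4) + Rabs (ocoord y 5) + Rabs (ocoord y 6) + Rabs (ocoord y 7).

Lemma sq_le_sum8 (y0 y1 y2 y3 y4 y5 y6 y7 : R) : 0 <= y0 -> 0 <= y1 -> 0 <= y2 -> 0 <= y3 ->
  0 <= y4 -> 0 <= y5 -> 0 <= y6 -> 0 <= y7 ->
  y0^2+y1^2+y2^2+y3^2+y4^2+y5^2+y6^2+y7^2 <= (y0+y1+y2+y3+y4+y5+y6+y7)^2.
Proof.
  intros.
  assert (0 <= y0*y1) by (apply Rmult_le_pos; auto).
  assert (0 <= y0*y2) by (apply Rmult_le_pos; auto).
  assert (0 <= y0*y3) by (apply Rmult_le_pos; auto).
  assert (0 <= y0*y4) by (apply Rmult_le_pos; auto).
  assert (0 <= y0*y5) by (apply Rmult_le_pos; auto).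
  assert (0 <= y0*y6) by (apply Rmult_le_pos; auto).
  assert (0 <= y0*y7) by (apply Rmult_le_pos; auto).
  assert (0 <= y1*y2) by (apply Rmult_le_pos; auto).
  assert (0 <= y1*y3) by (apply Rmult_le_pos; auto).
  assert (0 <= y1*y4) by (apply Rmult_le_pos; auto).
  assert (0 <= y1*y5) by (apply Rmult_le_pos; auto).
  assert (0 <= y1*y6) by (apply Rmult_le_pos; auto).
  assert (0 <= y1*y7) by (apply Rmult_le_pos; auto).
  assert (0 <= y2*y3) by (apply Rmult_le_pos; auto).
  assert (0 <= y2*y4) by (apply Rmult_le_pos; auto).
  assert (0 <= y2*y5) by (apply Rmult_le_pos; auto).
  assert (0 <= y2*y6) by (apply Rmult_le_pos; auto).
  assert (0 <= y2*y7) by (apply Rmult_le_pos; auto).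
  assert (0 <= y3*y4) by (apply Rmult_le_pos; auto).
  assert (0 <= y3*y5) by (apply Rmult_le_pos; auto).
  assert (0 <= y3*y6) by (apply Rmult_le_pos; auto).
  assert (0 <= y3*y7) by (apply Rmult_le_pos; auto).
  assert (0 <= y4*y5) by (apply Rmult_le_pos; auto).
  assert (0 <= y4*y6) by (apply Rmult_le_pos; auto).
  assert (0 <= y4*y7) by (apply Rmult_le_pos; auto).
  assert (0 <= y5*y6) by (apply Rmult_le_pos; auto).
  assert (0 <= y5*y7) by (apply Rmult_le_pos; auto).
  assert (0 <= y6*y7) by (apply Rmult_le_pos; auto).
  lra.
Qed.

Lemma onorm_le_csum y : onorm y <= csum y.
Proof.
  rewrite onorm_osq. unfold csum.
  assert (Hc : 0 <= csum y) by (unfold csum; generalize (Rabs_pos (ocoord y 0)) (Rabs_pos (ocoord y 1))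
    (Rabs_pos (ocoord y 2)) (Rabs_pos (ocoord y 3)) (Rabs_pos (ocoord y 4)) (Rabs_pos (ocoord y 5))
    (Rabs_pos (ocoord y 6)) (Rabs_pos (ocoord y 7)); lra).
  unfold csum in Hc. rewrite <- (sqrt_Rsqr _ Hc). apply sqrt_le_1_alt.
  unfold Rsqr. match goal with |- _ <= ?X * ?X => replace (X*X) with (X^2) by ring end.
  destruct y as [[a0 a1 a2 a3] [a4 a5 a6 a7]]; unfold osq; cbn [ocoord olo ohi q0 q1 q2 q3].
  rewrite <- (pow2_abs a0), <- (pow2_abs a1), <- (pow2_abs a2), <- (pow2_abs a3),
    <- (pow2_abs a4), <- (pow2_abs a5), <- (pow2_abs a6), <- (pow2_abs a7).
  apply sq_le_sum8; apply Rabs_pos.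
Qed.

Lemma bern d k : 0 <= d <= 1 -> 1 - INR k * d <= (1 - d)^k.
Proof.
  intros Hd. induction k; [simpl; lra|].
  rewrite S_INR. change ((1-d)^(S k)) with ((1-d) * (1-d)^k).
  assert (0 <= INR k) by apply pos_INR. nra.
Qed.

Lemma csum_ex (a : nat -> oct) r : slice_regular_ball a -> 0 <= r < 1 ->
  ex_series (fun m => r^m * csum (a m)).
Proof.
  intros Hsr Hr. set (rho := (1 + r) / 2).
  assert (Hrho : onorm (oreal rho) < 1) by (rewrite onorm_oreal, Rabs_right; unfold rho; lra).
  specialize (Hsr _ Hrho).
  assert (Hi : forall i, (i < 8)%nat -> ex_series (fun m => r^m * Rabs (ocoord (a m) i))).
  { intros i Hi. apply (abs_conv _ rho); [unfold rho; lra|].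
    apply (ex_series_Rext (fun m => ocoord (term a (oreal rho) m) i)); [|apply Hsr; auto].
    intros; apply term_real. }
  unfold csum.
  apply (ex_series_Rext (fun m => r^m * Rabs (ocoord (a m) 0) + r^m * Rabs (ocoord (a m) 1)
    + r^m * Rabs (ocoord (a m) 2) + r^m * Rabs (ocoord (a m) 3) + r^m * Rabs (ocoord (a m) 4)
    + r^m * Rabs (ocoord (a m) 5) + r^m * Rabs (ocoord (a m) 6) + r^m * Rabs (ocoord (a m) 7))).
  { intros; ring. }
  repeat apply ex_series_Rplus; apply Hi; lia.
Qed.

Lemma coef_bound (a : nat -> oct) a0 : slice_regular_ball a -> maps_into_Pi a ->
  a 0%nat = oreal a0 -> forall k, (0 < k)%nat -> onorm (a k) <= 2 * (1 - a0).
Proof.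
  intros Hsr Hpi Ha0 k Hk.
  destruct (choose_u (a k)) as [u [Hu0 [Hu1 Hua]]].
  assert (Hnu : onorm u = 1) by (rewrite onorm_osq, Hu1; apply sqrt_1).
  set (A := fun m => ocoord (a m) 0).
  set (B := fun m => ocoord (omul u (a m)) 0).
  assert (Hr : forall r, 0 <= r < 1 -> r^k * onorm (a k) <= 2 * (1 - a0)).
  { intros r Hr.
    replace (onorm (a k)) with (sqrt (A k ^ 2 + B k ^ 2)) by (rewrite onorm_osq, <- Hua; reflexivity).
    apply (carath A B r a0 k); auto.
    - unfold A. rewrite Ha0. reflexivity.
    - apply (ex_series_cmp _ (fun m => 2 * (r^m * csum (a m)))).
      + intros m. rewrite Rabs_right.
        2:{ apply Rle_ge, Rmult_le_pos; [apply pow_le; lra|]. generalize (Rabs_pos (A m)) (Rabs_pos (B m)); lra. }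
        assert (Rabs (A m) <= onorm (a m)) by apply coord_le.
        assert (Rabs (B m) <= onorm (a m)).
        { unfold B. eapply Rle_trans; [apply coord_le|]. rewrite onorm_mul, Hnu; lra. }
        generalize (onorm_le_csum (a m)) (pow_le r m (proj1 Hr)). nra.
      + apply ex_series_Rscal_l, csum_ex; auto.
    - intros t. set (x := sl (r * cos t) (r * sin t) u).
      assert (Hx : onorm x = r).
      { unfold x. rewrite onorm_osq, osq_sl by auto.
        replace ((r * cos t)^2 + (r * sin t)^2) with (r^2 * ((sin t)² + (cos t)²)) by (unfold Rsqr; ring).
        rewrite sin2_cos2, Rmult_1_r. replace (r^2) with (Rsqr r) by (unfold Rsqr; ring). apply sqrt_Rsqr; lra. }
      assert (Hle := Hpi x ltac:(lra)). rewrite oRe_sfun in Hle.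
      eapply Rle_trans; [|exact Hle]. apply Req_le. apply Series_ext. intros m.
      unfold term, x. rewrite sl_pow by auto. rewrite Re_sl_mul. unfold A, B. ring. }
  set (L := onorm (a k)). set (c := 2 * (1 - a0)).
  destruct (Rle_lt_dec L c) as [|HLc]; auto. exfalso.
  assert (HL : 0 < L).
  { apply Rle_lt_trans with c; auto. unfold c. specialize (Hr 0 ltac:(lra)).
    rewrite pow_i in Hr by auto. lra. }
  assert (Hc0 : 0 <= c).
  { unfold c. specialize (Hr 0 ltac:(lra)). rewrite pow_i in Hr by auto. lra. }
  assert (Hk' : 1 <= INR k) by (apply (le_INR 1); lia).
  set (d := (1 - c / L) / (2 * INR k)).
  assert (Hq : 0 <= c / L < 1).
  { split; [apply Rdiv_le_0_compat; lra|]. apply (Rmult_lt_reg_r L); auto.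
    replace (c / L * L) with c by (field; lra). lra. }
  assert (Hd : 0 < d <= 1 / 2).
  { unfold d. split; [apply Rdiv_lt_0_compat; lra|].
    apply (Rmult_le_reg_r (2 * INR k)); [lra|].
    replace ((1 - c / L) / (2 * INR k) * (2 * INR k)) with (1 - c / L) by (field; lra). nra. }
  specialize (Hr (1 - d) ltac:(lra)).
  generalize (bern d k ltac:(lra)). intros Hb.
  assert (INR k * d = (1 - c / L) / 2) by (unfold d; field; lra).
  assert (c / L * L = c) by (field; lra).
  assert (Hm : (1 - INR k * d) * L <= (1 - d)^k * L) by (apply Rmult_le_compat_r; lra).
  rewrite H in Hm. revert Hm H0 Hr HLc. generalize (c / L). intros q Hm Hqq Hr' HLc'.
  assert (Hm2 : L / 2 + (q * L) / 2 <= (1 - d)^k * L) by (replace (L/2 + q*L/2) with ((1 - (1 - q)/2) * L) by field; auto).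
  rewrite Hqq in Hm2. change (onorm (a k)) with L in Hr'. change (2 * (1 - a0)) with c in Hr'. lra.
Qed.

Lemma g_nonneg Rs r : 0 < Rs < 1 -> 3 * Rs ^ 3 - 5 * Rs ^ 2 - 3 * Rs + 1 = 0 ->
  0 <= r <= Rs -> 0 <= 3 * r ^ 3 - 5 * r ^ 2 - 3 * r + 1.
Proof.
  intros HR Hroot Hr.
  assert (E : 3 * r ^ 3 - 5 * r ^ 2 - 3 * r + 1 =
     (r - Rs) * (3 * (r*r + r*Rs + Rs*Rs) - 5 * (r + Rs) - 3)) by (rewrite <- (Rminus_0_r (_ * _)), <- Hroot; ring).
  rewrite E.
  assert (3 * (r*r + r*Rs + Rs*Rs) - 5 * (r + Rs) - 3 <= 0) by nra.
  assert (r - Rs <= 0) by lra. nra.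
Qed.

Lemma G_le1 r : 0 <= r < 1 -> 0 <= 3 * r ^ 3 - 5 * r ^ 2 - 3 * r + 1 ->
  2 * r / (1 - r) + 4 * r^2 / ((1 - r) * (1 - r^2)) <= 1.
Proof.
  intros Hr Hg.
  assert (H1 : 0 < 1 - r) by lra. assert (H2 : 0 < 1 - r^2) by nra.
  apply (Rmult_le_reg_r ((1 - r) * (1 - r^2))); [nra|].
  replace ((2 * r / (1 - r) + 4 * r^2 / ((1 - r) * (1 - r^2))) * ((1 - r) * (1 - r^2)))
    with (2 * r * (1 - r^2) + 4 * r^2) by (field; lra).
  nra.
Qed.

Lemma bohr_alg Rs r a0 : 0 < Rs < 1 -> 3 * Rs ^ 3 - 5 * Rs ^ 2 - 3 * Rs + 1 = 0 ->
  0 <= r <= Rs -> 0 <= a0 < 1 ->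
  a0 + 2 * (1 - a0) * (r / (1 - r)) + (1 / (1 + a0) + r / (1 - r)) * (4 * (1 - a0)^2 * (r^2 / (1 - r^2))) <= 1.
Proof.
  intros HR Hroot Hr Ha.
  assert (Hr1 : 0 <= r < 1) by lra.
  generalize (G_le1 r Hr1 (g_nonneg Rs r HR Hroot Hr)). intro HG.
  set (t := 1 - a0).
  assert (Ht : 0 < t <= 1) by (unfold t; lra).
  assert (H1 : 0 < 1 - r) by lra. assert (H2 : 0 < 1 - r^2) by nra.
  assert (Hk : 1 / (1 + a0) + r / (1 - r) <= 1 / (1 - r)).
  { assert (1 / (1 + a0) <= 1) by (apply (Rmult_le_reg_r (1 + a0)); [lra|]; field_simplify; lra).
    replace (1 / (1 - r)) with (1 + r / (1 - r)) by (field; lra). lra. }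
  assert (Hq : 0 <= 4 * t^2 * (r^2 / (1 - r^2))).
  { apply Rmult_le_pos; [nra|]. apply Rdiv_le_0_compat; nra. }
  assert (Hx : (1 / (1 + a0) + r / (1 - r)) * (4 * t^2 * (r^2 / (1 - r^2)))
             <= t * (4 * r^2 / ((1 - r) * (1 - r^2)))).
  { eapply Rle_trans; [apply Rmult_le_compat_r; [exact Hq | exact Hk]|].
    replace (1 / (1 - r) * (4 * t ^ 2 * (r ^ 2 / (1 - r ^ 2)))) with (t^2 * (4 * r^2 / ((1 - r) * (1 - r^2))))
      by (field; lra).
    apply Rmult_le_compat_r; [apply Rdiv_le_0_compat; nra|]. nra. }
  assert (E : 2 * t * (r / (1 - r)) = t * (2 * r / (1 - r))) by (field; lra).
  rewrite E.
  assert (t * (2 * r / (1 - r)) + t * (4 * r ^ 2 / ((1 - r) * (1 - r ^ 2))) <= t) by nra.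
  unfold t in *. lra.
Qed.

Lemma geo_le q N : 0 <= q < 1 -> sum_f_R0 (fun i => q^i) N <= 1 / (1 - q).
Proof.
  intros Hq. rewrite tech3 by lra. apply Rmult_le_compat_r.
  - apply Rlt_le, Rinv_0_lt_compat; lra.
  - generalize (pow_le q (S N) (proj1 Hq)); lra.
Qed.

Lemma part1 (Rs : R) (HRs : 0 < Rs < 1)
  (HRs_root : 3 * Rs ^ 3 - 5 * Rs ^ 2 - 3 * Rs + 1 = 0) :
  forall (a : nat -> oct) (a0 : R),
      slice_regular_ball a -> maps_into_Pi a ->
      a 0%nat = oreal a0 -> 0 <= a0 < 1 ->
      forall x : oct, onorm x < 1 -> onorm x <= Rs -> Rbar_le (Ef a a0 x) 1.
Proof.
  intros a a0 Hsr Hpi Ha0 Ha x Hx1 HxR.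
  set (r := onorm x) in *. assert (Hr0 : 0 <= r) by apply onorm_ge0.
  set (t := 1 - a0).
  assert (Hcoef : forall k, (0 < k)%nat -> onorm (a k) <= 2 * t) by (intros; apply (coef_bound a a0); auto).
  assert (Hterm : forall k, onorm (term a x k) = r^k * onorm (a k))
    by (intros; unfold term; rewrite onorm_mul, onorm_pow; auto).
  assert (HtS : forall i, onorm (term a x (S i)) <= 2 * t * r * r^i).
  { intros i. rewrite Hterm. specialize (Hcoef (S i) ltac:(lia)).
    assert (0 <= r * r^i) by (apply Rmult_le_pos; auto; apply pow_le; auto).
    simpl. generalize (Rmult_le_compat_l _ _ _ H Hcoef). intro. lra. }
  assert (Ht0 : onorm (term a x 0) = a0).
  { rewrite Hterm, Ha0, onorm_oreal. rewrite (Rabs_right a0) by lra. simpl; ring. }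
  assert (HS1 : forall N, sum_f_R0 (fun k => onorm (term a x k)) N <= a0 + 2 * t * (r / (1 - r))).
  { intros N. assert (0 < 1 - r) by lra.
    assert (0 <= 2 * t * (r / (1 - r))) by (apply Rmult_le_pos; [unfold t; lra| apply Rdiv_le_0_compat; lra]).
    destruct N as [|N]; [simpl; lra|].
    rewrite decomp_sum by lia. rewrite Ht0. simpl pred.
    apply Rplus_le_compat_l.
    eapply Rle_trans; [apply sum_Rle; intros i _; apply HtS|].
    rewrite (sum_scal_l (fun i => r^i) (2 * t * r)).
    replace (2 * t * (r / (1 - r))) with (2 * t * r * (1 / (1 - r))) by (field; lra).
    apply Rmult_le_compat_l; [apply Rmult_le_pos; [unfold t; lra|lra]|]. apply geo_le; lra. }
  assert (HS2 : forall N, sum_f_R0 (fun k => onorm (term a x (S k)) ^ 2) N <= 4 * t^2 * (r^2 / (1 - r^2))).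
  { intros N. assert (0 < 1 - r^2) by nra.
    eapply Rle_trans.
    - apply sum_Rle. intros i _. instantiate (1 := fun i => 4 * t^2 * r^2 * (r^2)^i).
      cbv beta. specialize (HtS i). generalize (onorm_ge0 (term a x (S i))). intro.
      replace (4 * t ^ 2 * r ^ 2 * (r ^ 2) ^ i) with ((2 * t * r * r^i)^2)
        by (rewrite <- pow_mult, Nat.mul_comm, pow_mult; ring).
      apply pow_incr; auto.
    - rewrite (sum_scal_l (fun i => (r^2)^i) (4 * t^2 * r^2)).
      replace (4 * t ^ 2 * (r ^ 2 / (1 - r ^ 2))) with (4 * t^2 * r^2 * (1 / (1 - r^2))) by (field; lra).
      apply Rmult_le_compat_l; [nra|]. apply geo_le; nra. }
  assert (HK : 0 <= 1 / (1 + a0) + r / (1 - r)).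
  { assert (0 <= 1 / (1 + a0)) by (apply Rdiv_le_0_compat; lra).
    assert (0 <= r / (1 - r)) by (apply Rdiv_le_0_compat; lra). lra. }
  assert (Hb := bohr_alg Rs r a0 HRs HRs_root ltac:(split; auto) Ha). fold t in Hb.
  unfold Ef. fold r.
  rewrite <- (Lim_seq_const 1).
  apply Lim_seq_le_loc. exists 0%nat. intros N _.
  eapply Rle_trans; [|exact Hb].
  apply Rplus_le_compat; [apply HS1|]. apply Rmult_le_compat_l; auto.
Qed.

Definition aex (k : nat) : oct := match k with O => oreal 0 | S _ => oreal (-2) end.

Lemma omul_oreal_r y c : omul y (oreal c) = oscal c y.
Proof. destruct y as [[a0 a1 a2 a3] [a4 a5 a6 a7]]. ounf. f_equal; f_equal; ring. Qed.

Lemma alt_id x y : omul x (omul x y) = oadd (oscal (2 * ocoord x 0) (omul x y)) (oscal (- osq x) y).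
Proof.
  destruct x as [[a0 a1 a2 a3] [a4 a5 a6 a7]]. destruct y as [[b0 b1 b2 b3] [b4 b5 b6 b7]].
  unfold osq. ounf. f_equal; f_equal; ring.
Qed.

Lemma onorm_aex k : onorm (aex k) <= 2.
Proof. destruct k; simpl; rewrite onorm_oreal; rewrite Rabs_left1 || rewrite Rabs_R0; lra. Qed.

Lemma aex_sr : slice_regular_ball aex.
Proof.
  intros x Hx i Hi.
  apply (ex_series_cmp _ (fun k => 2 * onorm x ^ k)).
  - intros k. eapply Rle_trans; [apply coord_le|]. unfold term. rewrite onorm_mul, onorm_pow.
    generalize (onorm_aex k) (pow_le (onorm x) k (onorm_ge0 x)). nra.
  - apply ex_series_Rscal_l, ex_series_geom. rewrite Rabs_right; generalize (onorm_ge0 x); lra.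
Qed.

Lemma aex_pi : maps_into_Pi aex.
Proof.
  intros x Hx. rewrite oRe_sfun.
  set (c := fun m => ocoord (opow x m) 0).
  set (al := ocoord x 0). set (q := osq x).
  assert (Hq : 0 <= q < 1).
  { split; [apply osq_ge0|]. unfold q. rewrite onorm_osq in Hx.
    destruct (Rlt_le_dec (osq x) 1); auto. exfalso. assert (1 <= sqrt (osq x)) by (rewrite <- sqrt_1; apply sqrt_le_1_alt; auto). lra. }
  assert (Hal : al^2 <= q).
  { unfold al, q. destruct x as [[a0 a1 a2 a3] [a4 a5 a6 a7]]. unfold osq. simpl. nra. }
  assert (Hc : ex_series c).
  { apply (ex_series_cmp _ (fun k => onorm x ^ k)).
    - intros k. unfold c. rewrite <- onorm_pow. apply coord_le.
    - apply ex_series_geom. rewrite Rabs_right; generalize (onorm_ge0 x); lra. }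
  assert (Hrec : forall m, c (S (S m)) = 2 * al * c (S m) - q * c m).
  { intros m. unfold c. change (opow x (S (S m))) with (omul x (omul x (opow x m))).
    rewrite alt_id. change (opow x (S m)) with (omul x (opow x m)).
    unfold al, q. cbn [ocoord oadd oscal olo ohi q0 qadd]. ring. }
  assert (Hc0 : c 0%nat = 1) by reflexivity.
  assert (Hc1 : c 1%nat = al).
  { unfold c, al. simpl opow. destruct x as [[a0 a1 a2 a3] [a4 a5 a6 a7]]. ounf. ring. }
  assert (HcS : ex_series (fun m => c (S m))) by (apply (ex_series_incr_1 c); auto).
  assert (HcSS : ex_series (fun m => c (S (S m)))) by (apply (ex_series_incr_1 (fun m => c (S m))); auto).
  set (Sc := Series c).
  assert (E1 : Sc = 1 + Series (fun m => c (S m))) by (unfold Sc; rewrite Series_incr_1, Hc0 by auto; auto).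
  assert (E2 : Series (fun m => c (S m)) = al + Series (fun m => c (S (S m))))
    by (rewrite (Series_incr_1 (fun m => c (S m))), Hc1 by auto; auto).
  assert (E3 : Series (fun m => c (S (S m))) = 2 * al * Series (fun m => c (S m)) - q * Sc).
  { rewrite (Series_ext _ (fun m => 2 * al * c (S m) - q * c m)) by auto.
    rewrite Series_minus, !Series_scal_l; auto; apply ex_series_Rscal_l; auto. }
  assert (HD : 0 < 1 - 2 * al + q) by nra.
  assert (HSc : Sc * (1 - 2 * al + q) = 1 - al) by nra.
  assert (Ht : forall m, ocoord (term aex x m) 0 = match m with O => 0 | S _ => -2 * c m end).
  { intros [|m]; unfold term, aex; rewrite omul_oreal_r, ocoord_oscal; unfold c; [ring|ring]. }
  rewrite (Series_ext _ (fun m => match m with O => 0 | S _ => -2 * c m end)) by auto.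
  rewrite Series_incr_1.
  2:{ apply (ex_series_incr_1 (fun m => match m with O => 0 | S _ => -2 * c m end)).
      apply (ex_series_Rext (fun m => -2 * c (S m))); [intros; reflexivity|]. apply ex_series_Rscal_l; auto. }
  rewrite Series_scal_l.
  assert (Sc * 2 >= 1).
  { assert (Sc * (1 - 2 * al + q) * 2 >= (1 - 2 * al + q)) by (rewrite HSc; lra).
    nra. }
  lra.
Qed.

Lemma lim_geo q : 0 <= q < 1 -> is_lim_seq (fun N => sum_f_R0 (fun k => q^k) N) (/ (1 - q)).
Proof. intros Hq. apply is_series_lim, is_series_geom. rewrite Rabs_right; lra. Qed.

Lemma part2 (Rs : R) (HRs : 0 < Rs < 1)
  (HRs_root : 3 * Rs ^ 3 - 5 * Rs ^ 2 - 3 * Rs + 1 = 0) r :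
  Rs < r < 1 -> Rbar_lt 1 (Ef aex 0 (oreal r)).
Proof.
  intros Hr.
  assert (Hnx : onorm (oreal r) = r) by (rewrite onorm_oreal, Rabs_right; lra).
  assert (Hterm : forall k, onorm (term aex (oreal r) k) = match k with O => 0 | S _ => 2 * r^k end).
  { intros [|k]; unfold term; rewrite onorm_mul, onorm_pow, Hnx; simpl aex; rewrite onorm_oreal.
    - rewrite Rabs_R0; ring.
    - rewrite Rabs_left by lra. simpl. ring. }
  assert (HS1 : forall N, sum_f_R0 (fun k => onorm (term aex (oreal r) k)) N = 2 * sum_f_R0 (fun k => r^k) N - 2).
  { induction N; simpl sum_f_R0; rewrite Hterm; [lra|]. rewrite IHN. change (r ^ S N) with (r * r ^ N). ring. }
  assert (HS2 : forall N, sum_f_R0 (fun k => onorm (term aex (oreal r) (S k)) ^ 2) N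
                = 4 * r^2 * sum_f_R0 (fun k => (r^2)^k) N).
  { intros N. rewrite <- sum_scal_l. apply sum_eq. intros i _. rewrite Hterm.
    rewrite <- pow_mult, Nat.mul_comm, pow_mult. simpl. ring. }
  set (K := 1 / (1 + 0) + r / (1 - r)).
  set (G := 2 * (/ (1 - r)) - 2 + K * (4 * r^2 * / (1 - r^2))).
  assert (Hlim : is_lim_seq (fun N => sum_f_R0 (fun k => onorm (term aex (oreal r) k)) N
      + K * sum_f_R0 (fun k => onorm (term aex (oreal r) (S k)) ^ 2) N) G).
  { apply (is_lim_seq_ext (fun N => (2 * sum_f_R0 (fun k => r^k) N - 2) + K * (4 * r^2 * sum_f_R0 (fun k => (r^2)^k) N))).
    { intros N. rewrite HS1, HS2. reflexivity. }
    apply is_lim_seq_plus'.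
    - apply is_lim_seq_minus'; [|apply is_lim_seq_const].
      apply is_lim_seq_mult'; [apply is_lim_seq_const|]. apply lim_geo; lra.
    - apply is_lim_seq_mult'; [apply is_lim_seq_const|].
      apply is_lim_seq_mult'; [apply is_lim_seq_const|]. apply lim_geo; nra. }
  unfold Ef. rewrite Hnx. fold K. rewrite (is_lim_seq_unique _ _ Hlim). simpl.
  assert (Hg : 3 * r ^ 3 - 5 * r ^ 2 - 3 * r + 1 < 0).
  { assert (E : 3 * r ^ 3 - 5 * r ^ 2 - 3 * r + 1 =
     (r - Rs) * (3 * (r*r + r*Rs + Rs*Rs) - 5 * (r + Rs) - 3)) by (rewrite <- (Rminus_0_r (_ * _)), <- HRs_root; ring).
    rewrite E. assert (3 * (r*r + r*Rs + Rs*Rs) - 5 * (r + Rs) - 3 < 0) by nra.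
    assert (0 < r - Rs) by lra. nra. }
  assert (H1 : 0 < 1 - r) by lra. assert (H2 : 0 < 1 - r^2) by nra.
  unfold G, K.
  replace (2 * / (1 - r) - 2 + (1 / (1 + 0) + r / (1 - r)) * (4 * r ^ 2 * / (1 - r ^ 2)))
    with ((2 * r * (1 - r^2) + 4 * r^2) / ((1 - r) * (1 - r^2))) by (field; lra).
  apply (Rmult_lt_reg_r ((1 - r) * (1 - r^2))); [nra|].
  replace ((2 * r * (1 - r ^ 2) + 4 * r ^ 2) / ((1 - r) * (1 - r ^ 2)) * ((1 - r) * (1 - r ^ 2)))
    with (2 * r * (1 - r ^ 2) + 4 * r ^ 2) by (field; lra).
  nra.
Qed.

Theorem theorem1p6 (Rs : R) (HRs : 0 < Rs < 1)
  (HRs_root : 3 * Rs ^ 3 - 5 * Rs ^ 2 - 3 * Rs + 1 = 0) :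
  (forall (a : nat -> oct) (a0 : R),
      slice_regular_ball a -> maps_into_Pi a ->
      a 0%nat = oreal a0 -> 0 <= a0 < 1 ->
      forall x : oct, onorm x < 1 -> onorm x <= Rs -> Rbar_le (Ef a a0 x) 1)
  /\
  (forall r : R, Rs < r < 1 ->
     exists (a : nat -> oct) (a0 : R),
       slice_regular_ball a /\ maps_into_Pi a /\
       a 0%nat = oreal a0 /\ 0 <= a0 < 1 /\
       exists x : oct, onorm x = r /\ Rbar_lt 1 (Ef a a0 x)).
Proof.
  split.
  - apply part1; auto.
  - intros r Hr. exists aex, 0. split; [apply aex_sr|]. split; [apply aex_pi|].
    split; [reflexivity|]. split; [lra|].
    exists (oreal r). split.
    + rewrite onorm_oreal, Rabs_right; lra.
    + apply (part2 Rs HRs HRs_root r Hr).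
Qed.
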